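(* Let $m_1,\dots,m_k$ be natural numbers with greatest common divisor $q$, and let $\chi_1,\dots,\chi_k\in\mathbb{Z}_2$. Suppose that either (1) there exist $i,j\in\{1,\dots,k\}$ with $m_i$ even, $\chi_i\neq0$ and $m_j$ odd; or (2) there exist $i,j\in\{1,\dots,k\}$ with $m_i$ odd, $\chi_i=0$ and $\chi_j\neq0$. Then there exists $N\in\mathbb{N}$ such that for every $n\ge N$ and every $\chi\in\mathbb{Z}_2$ there are $l_1,\dots,l_k\in\mathbb{N}$ with \[ l_1m_1+\dots+l_km_k=nq\quad\text{and}\quad l_1\chi_1+\dots+l_k\chi_k=\chi. \]
   Context: $\mathbb{N}=\{1,2,\dots\}$; $\mathbb{Z}_2=\mathbb{Z}/2\mathbb{Z}$, and $l\chi$ for $l\in\mathbb{N}$, $\chi\in\mathbb{Z}_2$ is the usual integer multiple in $\mathbb{Z}_2$. *)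

(* Defs.v *)
From mathcomp Require Import all_boot all_order all_algebra.
Set Implicit Arguments. Unset Strict Implicit. Unset Printing Implicit Defensive.
Import GRing.Theory.
(* Z_2 is modelled as 'Z_2 (= ordinal 2 with its ring structure);
   l chi is the iterated sum chi *+ l. *)

(* Main.v *)
Require Import Defs.
Set Warnings "-notation-overridden -ambiguous-paths".
From mathcomp Require Import all_boot all_order all_algebra zify ring.
Import GRing.Theory Num.Theory.
Lemma z2dbl (y : 'Z_2) : (y + y = 0)%R.
Proof. by case: y => [[|[|//]]] Hy; apply: val_inj. Qed.
Lemma z2neq (y x : 'Z_2) : y != x -> x = (y + 1)%R.
Proof.
by case: y => [[|[|//]]] Hy; case: x => [[|[|//]]] Hx //= _; apply: val_inj.
Qed.
Lemma z2nz (y : 'Z_2) : y != 0%R -> y = 1%R.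
Proof. by case: y => [[|[|//]]] Hy //= _; apply: val_inj. Qed.
Lemma z2mul (y : 'Z_2) n : (y *+ n = if odd n then y else 0)%R.
Proof.
elim: n => [|n IH]; first by rewrite mulr0n.
rewrite mulrS IH /=; case: (odd n) => /=; by rewrite ?z2dbl ?addr0.
Qed.
Lemma z2fact (a a' b b' R x : 'Z_2) : (a' + b' = 1)%R -> (a + b + R)%R != x ->
   (a + a' + (b - b') + R = x)%R.
Proof.
move=> H1 /z2neq ->; rewrite -H1.
have : (- b' = b')%R by apply/eqP; rewrite eq_sym -addr_eq0 z2dbl.
move=> ->; ring.
Qed.
Lemma bezout_big (I : finType) (r : seq I) (m : I -> nat) :
  exists a : I -> int, (\sum_(i : I) a i * Posz (m i))%R = (Posz (\big[gcdn/0%N]_(i <- r) m i)).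
Proof.
elim: r => [|x r [a Ha]].
  by exists (fun _ => 0%R); rewrite big_nil big1 // => i _; rewrite mul0r.
have [u [v Huv]] := Bezoutz (Posz (m x)) (Posz (\big[gcdn/0%N]_(i <- r) m i)).
exists (fun i => u * (i == x)%:R + v * a i)%R.
rewrite big_cons -[RHS]Huv -Ha mulr_sumr.
rewrite (eq_bigr (fun i => u * (i==x)%:R * m i + v * (a i * m i))%R); last first.
  by move=> i _; rewrite mulrDl !mulrA.
rewrite big_split /=; congr (_ + _)%R.
rewrite (bigD1 x) //= eqxx mulr1 big1 ?addr0 // => i /negbTE ->; by rewrite mulr0 mul0r.
Qed.
Lemma dvd_big (I : finType) (r : seq I) (m : I -> nat) j : j \in r ->
  (\big[gcdn/0%N]_(i <- r) m i %| m j)%N.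
Proof.
elim: r => [|x r IH] //; rewrite in_cons big_cons => /orP [/eqP ->|H].
  exact: dvdn_gcdl.
exact: dvdn_trans (dvdn_gcdr _ _) (IH H).
Qed.
Lemma rep (k:nat) (m : 'I_k -> nat) (i0 : 'I_k) (K : nat) :
  (forall i, 0 < m i)%N -> exists N, (0<N)%N /\ forall n, (N <= n)%N ->
  exists l : 'I_k -> nat, (forall i, K <= l i)%N /\
    (\sum_(i<k) l i * m i)%N = (n * \big[gcdn/0%N]_(i < k) m i)%N.
Proof.
move=> mpos.
set g := \big[gcdn/0%N]_(i < k) m i.
have gdvd : forall i, (g %| m i)%N by move=> i; apply: dvd_big; rewrite mem_index_enum.
have [a Ha] := bezout_big _ (index_enum 'I_k) m.
have g0 : (0 < g)%N.
  rewrite lt0n; apply/negP => /eqP g0; move: (gdvd i0); rewrite g0 dvd0n => /eqP H.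
  by move: (mpos i0); rewrite H.
set c := (m i0 %/ g)%N.
have Hc : m i0 = (c * g)%N by rewrite divnK.
have c0 : (0 < c)%N by move: (mpos i0); rewrite Hc muln_gt0 => /andP[].
set A := (\sum_(i<k) `|a i|)%N.
have HA : forall i, (`|a i| <= A)%N by move=> i; rewrite /A (bigD1 i) //= leq_addr.
set B' := (c * A + K)%N.
set S1 := (\sum_(i<k) (m i %/ g))%N.
set s := (B' * S1)%N.
exists (c * s.+1)%N; split; first by rewrite muln_gt0 c0.
move=> n Hn.
set t := (n %/ c)%N; set r := (n %% c)%N.
have Ht : (s < t)%N by rewrite /t leq_divRL // mulnC.
have Hr : (r < c)%N by rewrite ltn_mod.
have Hn' : n = (t * c + r)%N by rewrite /t /r -divn_eq.
pose L i : int := (Posz (c*B') + Posz r * a i)%R.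
have LK : forall i, (Posz K <= L i)%R.
  move=> i; have := HA i; rewrite /L /B'.
  have : (0 <= Posz r * (a i + Posz A))%R.
    apply: mulr_ge0 => //. 
    have := HA i. lia.
  nia.
pose l i := (`|L i|%N + (if i == i0 then t - s else 0))%N.
exists l; split.
  move=> i; rewrite /l; apply: leq_trans (leq_addr _ _).
  have := LK i; lia.
suff HH : Posz (\sum_(i<k) l i * m i)%N = Posz (n * g)%N by case: HH.
have E1 : Posz (\sum_(i<k) l i * m i)%N =
   (\sum_(i<k) L i * Posz (m i) + Posz (t - s) * Posz (m i0))%R.
  rewrite -[LHS]natz natr_sum.
  rewrite (eq_bigr (fun i => L i * Posz (m i) + Posz (if i == i0 then (t - s)%N else 0%N) * Posz (m i)))%R; last first.
    move=> i _; rewrite natrM natrD !natz gez0_abs ?mulrDl //.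
    by have := LK i; lia.
  rewrite big_split /=; congr (_ + _)%R.
  rewrite (bigD1 i0) //= eqxx big1 ?addr0 // => i /negbTE -> //.
have E2 : (\sum_(i<k) L i * Posz (m i) = Posz (c * B') * Posz (\sum_(i<k) m i) + Posz r * Posz g)%R.
  rewrite -Ha /L (eq_bigr (fun i => Posz (c*B') * Posz (m i) + Posz r * (a i * Posz (m i))))%R; last first.
    by move=> i _; rewrite mulrDl mulrA.
  rewrite big_split /= -!mulr_sumr; congr (_ * _ + _)%R.
  by rewrite -[RHS]natz natr_sum; apply: eq_bigr => i _; rewrite natz.
have E3 : (\sum_(i<k) m i = S1 * g)%N.
  rewrite /S1 big_distrl /=; apply: eq_bigr => i _; by rewrite divnK.
rewrite E1 E2 E3 Hn' Hc /s /B'.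
have E4 : Posz (t - s) = (Posz t - Posz s)%R by rewrite subzn // ltnW.
rewrite E4 /s /B'.
lia.
Qed.
Lemma split2 (R : nmodType) k (F : 'I_k -> R) p q : p != q ->
  (\sum_(i < k) F i = F p + F q + \sum_(i < k | (i != p) && (i != q)) F i)%R.
Proof. move=> pq; rewrite (bigD1 p) //= (bigD1 q) /=; [by rewrite addrA | by rewrite eq_sym]. Qed.
Lemma split2n k (F : 'I_k -> nat) p q : p != q ->
  (\sum_(i < k) F i = F p + F q + \sum_(i < k | (i != p) && (i != q)) F i)%N.
Proof. move=> pq; rewrite (bigD1 p) //= (bigD1 q) /=; [by rewrite addnA | by rewrite eq_sym]. Qed.

Theorem lemma4p7 (k : nat) (m : 'I_k -> nat) (chi : 'I_k -> 'Z_2) :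
  (forall i, 0 < m i)%N ->
  ((exists i j, ~~ odd (m i) /\ chi i != 0%R /\ odd (m j)) \/
   (exists i j, odd (m i) /\ chi i = 0%R /\ chi j != 0%R)) ->
  exists N : nat, (0 < N)%N /\
    forall (n : nat) (x : 'Z_2), (N <= n)%N ->
      exists l : 'I_k -> nat, (forall i, 0 < l i)%N /\
        (\sum_(i < k) l i * m i)%N = (n * \big[gcdn/0%N]_(i < k) m i)%N /\
        (\sum_(i < k) chi i *+ l i)%R = x.
Proof.
move=> mpos H.
have [p [q [pq Hd]]] : exists p q, p != q /\ (chi p *+ m q + chi q *+ m p = 1)%R.
  case: H => [[i [j [ei [ci oj]]]]|[i [j [oi [ci cj]]]]].
    exists i, j; split.
      by apply/negP => /eqP E; move: ei; rewrite E oj.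
    by rewrite !z2mul oj (negbTE ei) addr0 (z2nz _ ci).
  exists i, j; split.
    by apply/negP => /eqP E; move: cj; rewrite -E ci eqxx.
  by rewrite !z2mul oi ci (z2nz _ cj); case: (odd (m j)); rewrite ?add0r.
have [N [N0 HN]] := rep _ m p (m p).+1 mpos.
exists N; split => // n x /HN [l [lK Hl]].
case: (eqVneq (\sum_(i < k) chi i *+ l i)%R x) => hx.
  exists l; split; last by split.
  by move=> i; have := lK i; lia.
pose l' i := if i == p then (l p + m q)%N else if i == q then (l q - m p)%N else l i.
have lp : l' p = (l p + m q)%N by rewrite /l' eqxx.
have lq : l' q = (l q - m p)%N by rewrite /l' eq_sym (negbTE pq) eqxx.
have lr : forall i, (i != p) && (i != q) -> l' i = l i.
  by move=> i /andP [/negbTE h1 /negbTE h2]; rewrite /l' h1 h2.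
have lqK := lK q.
exists l'; split; [|split].
- move=> i; rewrite /l'; case: (i == p); first by rewrite addn_gt0 mpos orbT.
  case: (eqVneq i q) => [E|_]; last by have := lK i; lia.
  lia.
- rewrite -Hl (split2n _ _ _ _ pq) [in RHS](split2n _ _ _ _ pq) lp lq.
  rewrite (eq_bigr (fun i => l i * m i)%N); last by move=> i /lr ->.
  have h := leq_mul (ltnW lqK) (leqnn (m q)).
  by rewrite mulnDl mulnBl [m q * m p]mulnC -(addnA (l p * m p)) subnKC.
- move: hx; rewrite !(split2 _ _ _ _ _ pq) lp lq.
  have E : (\sum_(i<k | (i != p) && (i != q)) chi i *+ l' i = \sum_(i<k | (i != p) && (i != q)) chi i *+ l i)%R.
    by apply: eq_bigr => i /lr ->.
  rewrite E.
  rewrite mulrnDr mulrnBr; last by lia.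
  by move=> h; apply: (z2fact _ _ _ _ _ _ Hd h).
Qed.
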